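(* Let $n\geq 1$. There is a bijection $\phi$ from the set of functions $f\colon[n+1]\to[n]$ to the set of triply rooted trees on $[n]$ such that, for every such $f$: (i) the orbit of $n+1$ under $f$ with $n+1$ itself removed, i.e. $\{f(n+1),f^2(n+1),\dots\}$, is equal to the set of ancestors of the second root of $\phi(f)$; and (ii) the set of periodic points of $f$ is equal to the set of ancestors of the third root of $\phi(f)$.
   Context: $[m]=\{1,\dots,m\}$. A triply rooted tree on $[n]$ is a labeled tree with vertex set $[n]$ together with three distinguished vertices $r_1,r_2,r_3$ (first, second, third root), not necessarily distinct. Ancestors are taken with respect to the first root: a vertex $u$ is an ancestor of $v$ if $u$ lies on the unique path from $r_1$ to $v$ (in particular $v$ is an ancestor of itself and $r_1$ is an ancestor of every vertex). For $f\colon[n+1]\to[n]$, the orbit of $x$ is $\{x,f(x),f^2(x),\dots\}$ (where $f$ is iterated, which makes sense since $[n]\subseteq[n+1]$), and $x$ is a periodic point of $f$ if $f^j(x)=x$ for some $j\geq 1$. *)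

(* Defs.v *)
(* Convention: the element k of [m] = {1,...,m} is encoded as
   the ordinal k-1 : 'I_m.  Thus [n] is 'I_n, [n+1] is 'I_n.+1, the point n+1
   is ord_max, and the inclusion [n] ⊆ [n+1] is widen_ord (leqnSn n). *)
From mathcomp Require Import all_boot.
Set Implicit Arguments.
Unset Strict Implicit.
Unset Printing Implicit Defensive.

Definition incl (n : nat) (x : 'I_n) : 'I_n.+1 := widen_ord (leqnSn n) x.

Definition fself (n : nat) (f : {ffun 'I_n.+1 -> 'I_n}) (x : 'I_n.+1) : 'I_n.+1 :=
  incl (f x).

Definition periodic (n : nat) (f : {ffun 'I_n.+1 -> 'I_n}) (x : 'I_n.+1) : Prop :=
  exists j, 1 <= j /\ iter j (fself f) x = x.

Definition in_orbit_top (n : nat) (f : {ffun 'I_n.+1 -> 'I_n}) (y : 'I_n.+1) : Prop :=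
  exists k, 1 <= k /\ iter k (fself f) ord_max = y.

(* Graphs on vertex set [n] given by their edge sets (sets of 2-element sets). *)
Definition adj (n : nat) (E : {set {set 'I_n}}) : rel 'I_n :=
  fun u v => [set u; v] \in E.

Definition is_tree (n : nat) (E : {set {set 'I_n}}) : Prop :=
  (forall e, e \in E -> #|e| = 2) /\
  (forall u v : 'I_n, connect (adj E) u v) /\
  (forall c : seq 'I_n, uniq c -> 3 <= size c -> ~~ cycle (adj E) c).

Definition trt (n : nat) : Type := ({set {set 'I_n}} * 'I_n * 'I_n * 'I_n)%type.
Definition tedges (n : nat) (t : trt n) : {set {set 'I_n}} := t.1.1.1.
Definition root1 (n : nat) (t : trt n) : 'I_n := t.1.1.2.
Definition root2 (n : nat) (t : trt n) : 'I_n := t.1.2.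
Definition root3 (n : nat) (t : trt n) : 'I_n := t.2.

Definition is_trt (n : nat) (t : trt n) : Prop := is_tree (tedges t).

Definition ancestor (n : nat) (t : trt n) (u v : 'I_n) : Prop :=
  exists p : seq 'I_n,
    [/\ path (adj (tedges t)) (root1 t) p, last (root1 t) p = v,
        uniq (root1 t :: p) & u \in root1 t :: p].

(* Main.v *)
Require Import Defs.
From mathcomp Require Import all_boot.
From mathcomp Require Import zify.
From Stdlib Require Import FunctionalExtensionality.

Module T.

Set Implicit Arguments.
Unset Strict Implicit.
Unset Printing Implicit Defensive.

Lemma set2_eq (T : finType) (x y z w : T) :
  [set x; y] = [set z; w] -> (x = z /\ y = w) \/ (x = w /\ y = z).
Proof.
move=> E.
have hx : x \in [set z; w] by rewrite -E set21.
have hy : y \in [set z; w] by rewrite -E set22.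
have hz : z \in [set x; y] by rewrite E set21.
have hw : w \in [set x; y] by rewrite E set22.
case/set2P: hx; case/set2P: hy; case/set2P: hz; case/set2P: hw;
  move=> *; subst; auto.
Qed.

Lemma seq_max (T : eqType) (F : T -> nat) (c : seq T) x0 :
  x0 \in c -> exists2 x, x \in c & forall y, y \in c -> F y <= F x.
Proof.
elim: c x0 => [//|a c IH] x0 _.
case: c IH => [|b c] IH.
  by exists a; rewrite ?inE // => y; rewrite inE => /eqP->.
have [x xc xm] := IH b (mem_head _ _).
case: (leqP (F a) (F x)) => h.
  exists x; first by rewrite inE xc orbT.
  by move=> y; rewrite inE => /orP [/eqP->|/xm].
exists a; first by rewrite inE eqxx.
move=> y; rewrite inE => /orP [/eqP->//|/xm h']; lia.
Qed.

Lemma pigeon n (h : 'I_n -> 'I_n) x :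
  exists i j, [/\ i < j, j <= n & iter i h x = iter j h x].
Proof.
pose F (k : 'I_n.+1) := iter k h x.
have : ~~ injectiveb F.
  by apply/negP => /injectiveP/leq_card; rewrite !card_ord ltnn.
case/injectivePn => i [j] ij Fij.
have hi := ltn_ord i; have hj := ltn_ord j.
case: (ltngtP i j) => [lt|lt|eq].
- by exists i, j; split.
- by exists j, i; split.
- by move: ij; rewrite -val_eqE /= eq eqxx.
Qed.

Section Parent.
Variable n : nat.
Variables (p : 'I_n -> 'I_n) (r : 'I_n).
Hypothesis pr : p r = r.
Hypothesis reach : forall x, exists k, iter k p x = r.

Definition Ep := [set [set x; p x] | x in [set x | x != r]].

Lemma reachb x : exists k, iter k p x == r.
Proof. by have [k hk] := reach x; exists k; apply/eqP. Qed.

Definition dep x := ex_minn (reachb x).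

Lemma dep_iter x : iter (dep x) p x = r.
Proof. by rewrite /dep; case: ex_minnP => m /eqP. Qed.

Lemma dep_min x k : iter k p x = r -> dep x <= k.
Proof. by rewrite /dep; case: ex_minnP => m _ H /eqP /H. Qed.

Lemma iter_r k : iter k p r = r.
Proof. by elim: k => //= k ->. Qed.

Lemma iter_after x k : dep x <= k -> iter k p x = r.
Proof. by move=> h; rewrite -(subnK h) iterD dep_iter iter_r. Qed.

Lemma dep0 x : (dep x == 0) = (x == r).
Proof.
apply/eqP/eqP => [h|->]; first by rewrite -(dep_iter x) h.
by apply/eqP; rewrite -leqn0; apply: dep_min.
Qed.

Lemma dep_lt x : x != r -> dep (p x) < dep x.
Proof.
move=> xr; have : dep x != 0 by rewrite dep0.
move=> h; have : iter (dep x).-1 p (p x) = r.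
  by rewrite -iterSr prednK ?lt0n // dep_iter.
move/dep_min; lia.
Qed.

Lemma dep_le x : dep (p x) <= dep x.
Proof. by case: (eqVneq x r) => [->|/dep_lt/ltnW]; rewrite ?pr. Qed.

Lemma dep_iter_le j x : dep (iter j p x) <= dep x.
Proof. elim: j => //= j IH; exact: leq_trans (dep_le _) IH. Qed.

Lemma dep_iter_lt j x : 0 < j -> x != r -> dep (iter j p x) < dep x.
Proof.
case: j => // j _ xr; rewrite iterSr.
exact: leq_ltn_trans (dep_iter_le _ _) (dep_lt xr).
Qed.

Lemma no_cycle j x : 0 < j -> iter j p x = x -> x = r.
Proof.
move=> j0 h; apply/eqP; apply: contraT => xr.
by have := dep_iter_lt j0 xr; rewrite h ltnn.
Qed.

Lemma px_neq x : x != r -> p x != x.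
Proof. by move=> xr; apply/eqP => /(@no_cycle 1) /= h; move: xr; rewrite h ?eqxx. Qed.

Lemma iter_inj v a b : a <= dep v -> b <= dep v ->
  iter a p v = iter b p v -> a = b.
Proof.
wlog ab : a b / a <= b.
  move=> H ha hb e; case: (leqP a b) => h; first exact: H.
  by symmetry; apply: H => //; exact: ltnW.
move=> ha hb e; case: (ltnP a b) => [lt|ba]; last by apply/eqP; rewrite eqn_leq ab ba.
have : iter (b - a) p (iter a p v) = iter a p v by rewrite -iterD subnK // ltnW.
move/no_cycle; rewrite subn_gt0 => /(_ lt) /dep_min; lia.
Qed.

Lemma dep_lt_n x : dep x < n.
Proof.
have [i [j [ij jn e]]] := pigeon p x.
have : iter (j - i) p (iter i p x) = iter i p x by rewrite -iterD subnK // ltnW.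
move/no_cycle; rewrite subn_gt0 => /(_ ij) /dep_min; lia.
Qed.

Lemma adjEp x y :
  adj Ep x y = ((x != r) && (y == p x)) || ((y != r) && (x == p y)).
Proof.
apply/idP/idP.
  rewrite /adj /Ep => /imsetP [z]; rewrite inE => zr /set2_eq [[-> ->]|[-> ->]].
    by rewrite zr eqxx.
  by rewrite zr eqxx orbT.
case/orP => /andP [xr /eqP ->]; rewrite /adj /Ep.
  by apply/imsetP; exists x; rewrite ?inE.
by apply/imsetP; exists y; rewrite ?inE // setUC.
Qed.

Lemma adj_sym (m : nat) (E : {set {set 'I_m}}) : symmetric (adj E).
Proof. by move=> x y; rewrite /adj setUC. Qed.

Lemma adj_dep x y : adj Ep x y -> dep y <= dep x -> (x != r) && (y == p x).
Proof.
rewrite adjEp => /orP [//|/andP [yr /eqP e]]; rewrite e.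
by move: (dep_lt yr); lia.
Qed.

Lemma connect_r u : connect (adj Ep) u r.
Proof.
have [k <-] := reach u.
elim: k => [|k IH]; first exact: connect0.
apply: connect_trans IH _; rewrite iterS.
case: (eqVneq (iter k p u) r) => [->|h]; first by rewrite pr connect0.
by apply: connect1; rewrite adjEp h eqxx.
Qed.

Lemma Ep_tree : is_tree Ep.
Proof.
split; [|split].
- move=> e /imsetP [z]; rewrite inE => zr ->.
  by rewrite cards2 eq_sym px_neq.
- move=> u v; apply: connect_trans (connect_r u) _.
  by rewrite (sym_connect_sym (@adj_sym n Ep)) connect_r.
- move=> c uc c3; apply/negP => cc.
  have [x0 x0c] : exists x0, x0 \in c by case: c c3 {uc cc} => // a c _; exists a; rewrite inE eqxx.
  have [x xc xm] := seq_max dep x0c.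
  case: (rot_to xc) => i s ec.
  have := cc; rewrite -(rot_cycle i) ec /= rcons_path => /andP [ps lx].
  have us : uniq (x :: s) by rewrite -ec rot_uniq.
  have ss : 2 <= size s by move: c3; rewrite -(size_rot i) ec /=.
  case: s ec ps lx us ss => [//|a [//|b t]] ec ps lx us _.
  have inc y : y \in x :: a :: b :: t -> y \in c by rewrite -ec mem_rot.
  have ha : adj Ep x a by case/andP: ps.
  have hl : adj Ep x (last b t) by rewrite adj_sym.
  have ia : a \in c by apply: inc; rewrite !inE eqxx orbT.
  have ib : last b t \in c by apply: inc; rewrite in_cons in_cons mem_last !orbT.
  have /andP [_ /eqP ea] := adj_dep ha (xm _ ia).
  have /andP [_ /eqP eb] := adj_dep hl (xm _ ib).
  move: us; rewrite /= => /and3P [_ /negP hab _]; apply: hab.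
  by rewrite ea -eb mem_last.
Qed.

Lemma down s x : path (adj Ep) x s -> uniq (x :: s) -> (x = r \/ p x \notin s) ->
  path (fun a b => a == p b) x s.
Proof.
elim: s x => [//|y s IH] x /= /andP [axy ps] /and3P [xys ys us] h.
move: axy; rewrite adjEp => /orP [/andP [xr /eqP e]|/andP [yr /eqP e]].
  case: h => [/eqP|]; first by rewrite (negbTE xr).
  by rewrite -e inE eqxx.
rewrite e eqxx /=; apply: IH => //; first by rewrite /= ys.
by right; rewrite -e; move: xys; rewrite inE negb_or => /andP [].
Qed.

Lemma up s x u : path (fun a b => a == p b) x s -> u \in x :: s ->
  exists k, iter k p (last x s) = u.
Proof.
elim: s x u => [|y s IH] x u /=; first by rewrite inE => _ /eqP ->; exists 0.
case/andP => /eqP e ps; rewrite inE => /orP [/eqP ->|/(IH _ _ ps) //].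
have [k hk] := IH _ _ ps (mem_head _ _); exists k.+1; by rewrite iterS hk.
Qed.

Lemma anc_Ep u v :
  (exists s, [/\ path (adj Ep) r s, last r s = v, uniq (r :: s) & u \in r :: s])
  <-> exists k, iter k p v = u.
Proof.
split.
  move=> [s [ps ls us uin]]; rewrite -ls; apply: up uin.
  exact: down ps us (or_introl erefl).
move=> [k hk]; set d := dep v.
pose F i := iter (d - i) p v.
exists (map F (iota 1 d)).
have Er : r :: map F (iota 1 d) = map F (iota 0 d.+1).
  by rewrite /= /F subn0 dep_iter.
split.
- apply/(pathP r) => i; rewrite size_map size_iota => id.
  rewrite Er (nth_map 0); last by rewrite size_iota; lia.
  rewrite (nth_map 0); last by rewrite size_iota.
  rewrite !nth_iota //; last lia.
  rewrite /F adj_sym adjEp; apply/orP; left.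
  have -> : d - (0 + i) = (d - (1 + i)).+1 by lia.
  rewrite iterS eqxx andbT; apply/negP => /eqP /dep_min; rewrite -/d; lia.
- rewrite (last_nth r) Er size_map size_iota (nth_map 0) ?size_iota // nth_iota //.
  by rewrite /F add0n subnn.
- rewrite Er map_inj_in_uniq ?iota_uniq // => i j; rewrite !mem_iota => hi hj.
  by rewrite /F => /iter_inj; lia.
- rewrite Er; case: (leqP k d) => h.
    apply/mapP; exists (d - k); first by rewrite mem_iota; lia.
    by rewrite /F subKn.
  apply/mapP; exists 0; first by rewrite mem_iota.
  by rewrite /F subn0 dep_iter -hk iter_after //; exact: ltnW.
Qed.

End Parent.

Lemma Ep_uniq n (p q : 'I_n -> 'I_n) r (pr : p r = r)
  (hp : forall x, exists k, iter k p x = r) (qr : q r = r)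
  (hq : forall x, exists k, iter k q x = r) :
  Ep p r = Ep q r -> p =1 q.
Proof.
move=> E x; case: (eqVneq x r) => [->|xr]; first by rewrite pr qr.
have : exists k, iter k q x = q x by exists 1.
move/(anc_Ep qr hq); rewrite -E => /(anc_Ep pr hp) [j].
case: j => [/= e|j hj]; first by move: (px_neq qr hq xr); rewrite -e eqxx.
have hlt := dep_iter_lt pr hp (ltn0Sn j) xr; rewrite hj in hlt.
have : adj (Ep p r) x (q x) by rewrite E adjEp // xr eqxx.
rewrite adjEp // => /orP [/andP [_ /eqP] //|/andP [_ /eqP e]].
by have := dep_le pr hp (q x); rewrite -e; lia.
Qed.

Section Tree.
Variables (n : nat) (E : {set {set 'I_n}}) (r : 'I_n).
Hypothesis tE : is_tree E.

Definition dP x k := [exists s : k.-tuple 'I_n, path (adj E) x s && (last x s == r)].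

Lemma dPex x : exists k, dP x k.
Proof.
case: tE => _ [/(_ x r) /connectP [s ps ls] _].
by exists (size s); apply/existsP; exists (in_tuple s); rewrite /= ps -ls eqxx.
Qed.

Definition dist x := ex_minn (dPex x).

Lemma dist_step x : x != r -> exists2 y, adj E x y & dist y < dist x.
Proof.
move=> xr; rewrite {2}/dist; case: ex_minnP => m /existsP [t /andP [pt lt]] _.
have st := size_tuple t.
case: (tval t) pt lt st => [|y s] /=; first by rewrite (negbTE xr).
case/andP => axy ps ls ss; exists y => //.
rewrite /dist; case: ex_minnP => m' _ H.
have : dP y (size s) by apply/existsP; exists (in_tuple s); rewrite /= ps ls.
by move/H; rewrite -ss.
Qed.

Definition par x := if x == r then r else odflt r [pick y | adj E x y && (dist y < dist x)].

Lemma par_spec x : x != r -> adj E x (par x) && (dist (par x) < dist x).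
Proof.
move=> xr; rewrite /par (negbTE xr); case: pickP => [y -> //|none].
by have [y h1 h2] := dist_step xr; move: (none y); rewrite h1 h2.
Qed.

Lemma par_r : par r = r.
Proof. by rewrite /par eqxx. Qed.

Lemma par_reach x : exists k, iter k par x = r.
Proof.
suff H : forall m x, dist x < m -> exists k, iter k par x = r.
  exact: (H (dist x).+1).
elim=> // m IH y hy; case: (eqVneq y r) => [->|yr]; first by exists 0.
case/andP: (par_spec yr) => _ h.
have [k hk] := IH (par y) (leq_trans h hy).
by exists k.+1; rewrite iterSr.
Qed.

Lemma par_Ep : Ep par r = E.
Proof.
apply/setP => e; apply/idP/idP.
  case/imsetP => z; rewrite inE => zr ->.
  by case/andP: (par_spec zr).
move=> eE; case: tE => [sz [_ acy]].
have /cards2P [u [v [uv ee]]] : #|e| == 2 by rewrite sz.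
subst e.
apply: contraT => nE.
have /connectP [s ps ls] := (Ep_tree par_r par_reach).2.1 u v.
move: ls; case: (shortenP ps) => s' ps' us' _ ls.
have ls' : last u s' = v by [].
clear ls.
have ss : 2 <= size s'.
  case: s' ps' us' ls' => [/= _ _ e|y [|z t]] //=.
    by move: uv; rewrite e eqxx.
  by rewrite andbT => ha _ e; move: nE; rewrite -e; move: ha; rewrite /adj => ->.
have ps2 : path (adj E) u s'.
  apply: sub_path ps' => a b; rewrite /adj => /imsetP [z]; rewrite inE => zr ->.
  by case/andP: (par_spec zr).
have : cycle (adj E) (u :: s').
  by rewrite /= rcons_path ps2 ls' /adj setUC.
move=> cc; have h3 : 3 <= size (u :: s') by exact: ss.
by move: (acy _ us' h3); rewrite cc.
Qed.
End Tree.

End T.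
Import T.

Module J.

Set Implicit Arguments.
Unset Strict Implicit.
Unset Printing Implicit Defensive.

Lemma find_eq (T : Type) (x0 : T) (P : pred T) s i : i < size s ->
  P (nth x0 s i) -> (forall j, j < i -> ~~ P (nth x0 s j)) -> find P s = i.
Proof.
move=> hi hP hb; case: (ltngtP (find P s) i) => // h.
  have hh : has P s by rewrite has_find; lia.
  by move: (hb _ h); rewrite nth_find.
by move: (before_find x0 h); rewrite hP.
Qed.

Lemma index_eq (T : eqType) (x0 x : T) s i : i < size s ->
  nth x0 s i = x -> (forall j, j < i -> nth x0 s j != x) -> index x s = i.
Proof. move=> hi hx hb; rewrite /index; apply: (@find_eq T x0 (pred1 x) s i) => //=; by rewrite hx. Qed.

Lemma spine_iter (T : Type) (x0 : T) (q : T -> T) W :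
  (forall i, i < size W -> q (nth x0 W i) = nth x0 W i.-1) ->
  forall i j, i < size W -> iter j q (nth x0 W i) = nth x0 W (i - j).
Proof.
move=> H i j hi; elim: j => [|j IH]; first by rewrite subn0.
by rewrite iterS IH H ?subnS //; lia.
Qed.

Lemma map_traject (T : Type) (f : T -> T) x k :
  map f (traject f x k) = traject f (f x) k.
Proof. by elim: k x => // k IH x; rewrite !trajectS /= IH. Qed.

Lemma mem_drop_uniq (T : eqType) (s : seq T) k x : uniq s ->
  (x \in drop k s) = (x \in s) && (x \notin take k s).
Proof.
move=> us; rewrite -{2}(cat_take_drop k s) mem_cat.
move: us; rewrite -{1}(cat_take_drop k s) cat_uniq => /and3P [_ hd _].
case: (boolP (x \in take k s)) => h /=; last by rewrite andbT.
by apply/negP => hx; move/hasP: hd; apply; exists x.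
Qed.

Lemma iter_mul (T : Type) (f : T -> T) x j m : iter j f x = x -> iter (m * j) f x = x.
Proof. by move=> h; elim: m => // m IH; rewrite mulSn iterD IH h. Qed.

Section Joyal.
Variables (n : nat) (g : 'I_n -> 'I_n) (a : 'I_n).

Definition per x := fconnect g (g x) x.

Lemma perP x : reflect (exists2 j, 0 < j & iter j g x = x) (per x).
Proof.
apply: (iffP idP).
  move/iter_findex => h; exists (findex g (g x) x).+1 => //.
  by rewrite iterSr.
move=> [[//|j] _ h]; rewrite /per -{2}h iterSr; exact: fconnect_iter.
Qed.

Lemma per_g x : per x -> per (g x).
Proof. by move/perP => [j j0 h]; apply/perP; exists j => //; rewrite -iterSr iterS h. Qed.

Lemma per_iter k x : per x -> per (iter k g x).
Proof. by move=> h; elim: k => //= k IH; exact: per_g. Qed.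

Lemma per_n x : per (iter n g x).
Proof.
have [i [j [ij jn e]]] := pigeon g x.
have hy : per (iter i g x).
  apply/perP; exists (j - i); first lia.
  by rewrite -iterD subnK // ltnW.
have -> : iter n g x = iter (n - i) g (iter i g x) by rewrite -iterD subnK // ltnW // (leq_trans ij jn).
exact: per_iter.
Qed.

Lemma per_back x k : per x -> exists j, iter j g (iter k g x) = x.
Proof.
move/perP => [j j0 h]; exists (k * j - k).
by rewrite -iterD subnK ?iter_mul //; rewrite leq_pmulr.
Qed.

Lemma g_inj_per x y : per x -> per y -> g x = g y -> x = y.
Proof.
move=> /perP [i i0 hi] /perP [j j0 hj] e.
have hx : iter (j * i) g x = x by exact: iter_mul.
have hy : iter (i * j) g y = y by exact: iter_mul.
rewrite -hx -hy mulnC.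
have N0 : 0 < i * j by rewrite muln_gt0 i0.
by rewrite -(prednK N0) !iterSr e.
Qed.

Lemma exm : exists m, per (iter m g a).
Proof. by exists n; exact: per_n. Qed.

Definition m0 := ex_minn exm.
Definition c := iter m0 g a.

Lemma per_c : per c.
Proof. by rewrite /c /m0; case: ex_minnP. Qed.

Lemma m0_min i : per (iter i g a) -> m0 <= i.
Proof. by rewrite /m0; case: ex_minnP => m _ H /H. Qed.

Lemma m0_le_n : m0 <= n.
Proof. exact: m0_min (per_n a). Qed.

Lemma exk : exists k, (0 < k) && (iter k g c == c).
Proof. by case/perP: per_c => j j0 h; exists j; rewrite j0 h eqxx. Qed.

Definition k0 := ex_minn exk.

Lemma k0_gt0 : 0 < k0.
Proof. by rewrite /k0; case: ex_minnP => k /andP []. Qed.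

Lemma k0_iter : iter k0 g c = c.
Proof. by rewrite /k0; case: ex_minnP => k /andP [_ /eqP]. Qed.

Lemma k0_min j : 0 < j -> iter j g c = c -> k0 <= j.
Proof. by rewrite /k0; case: ex_minnP => k _ H j0 h; apply: H; rewrite j0 h eqxx. Qed.

Lemma iter_mod j : iter j g c = iter (j %% k0) g c.
Proof.
by rewrite {1}(divn_eq j k0) addnC iterD iter_mul // k0_iter.
Qed.

Definition C := traject g c k0.

Lemma C_uniq : uniq C.
Proof.
apply/(uniqP c) => i j; rewrite !inE /C size_traject => hi hj.
rewrite !nth_traject //.
wlog ij : i j hi hj / i <= j.
  move=> H e; case: (leqP i j) => h; first exact: H.
  by symmetry; apply: H => //; exact: ltnW.
move=> e; case: (ltnP i j) => [lt|ji]; last by apply/eqP; rewrite eqn_leq ij ji.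
have : iter (k0 - j + i) g c = c.
  by rewrite iterD e -iterD subnK ?k0_iter // ltnW.
move/k0_min; lia.
Qed.

Lemma memC x : (x \in C) = [exists j : 'I_k0, x == iter j g c].
Proof.
apply/trajectP/existsP => [[i hi ->]|[j /eqP ->]]; last by exists j.
by exists (Ordinal hi).
Qed.

Lemma iter_C j : iter j g c \in C.
Proof.
rewrite iter_mod; apply/trajectP; exists (j %% k0) => //.
by rewrite ltn_mod k0_gt0.
Qed.

Lemma memCP x : reflect (exists j, x = iter j g c) (x \in C).
Proof.
apply: (iffP idP); first by case/trajectP => i _ ->; exists i.
by case=> j ->; exact: iter_C.
Qed.

Lemma per_C x : x \in C -> per x.
Proof. by case/memCP => j ->; apply: per_iter; exact: per_c. Qed.

Definition Q := [set x | per x & x \notin C].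
Definition S := C ++ enum Q.
Definition W := map g S.

Lemma S_uniq : uniq S.
Proof.
rewrite /S cat_uniq C_uniq enum_uniq /= andbT.
by apply/hasP => [[x]]; rewrite mem_enum inE => /andP [_ /negP].
Qed.

Lemma mem_S x : (x \in S) = per x.
Proof.
rewrite mem_cat mem_enum inE; case: (boolP (x \in C)) => h /=.
  by rewrite (per_C h).
by rewrite andbT.
Qed.

Lemma W_uniq : uniq W.
Proof.
rewrite map_inj_in_uniq ?S_uniq // => x y; rewrite !mem_S; exact: g_inj_per.
Qed.

Lemma mem_W x : (x \in W) = per x.
Proof.
apply/mapP/idP => [[y]|]; first by rewrite mem_S => /per_g h ->.
move=> h; case/perP: (h) => [[//|j] _ hj].
exists (iter j g x); first by rewrite mem_S; exact: per_iter.
by rewrite -iterS.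
Qed.

Lemma size_S : size S = size W.
Proof. by rewrite size_map. Qed.

Lemma size_C : size C = k0.
Proof. by rewrite size_traject. Qed.

Lemma k0_le : k0 <= size W.
Proof. by rewrite -size_S size_cat size_C leq_addr. Qed.

Lemma nth_W i : i < size W -> nth a W i = g (nth a S i).
Proof. by move=> hi; rewrite (nth_map a) // size_S. Qed.

Lemma nth_S i : i < k0 -> nth a S i = iter i g c.
Proof. by move=> hi; rewrite nth_cat size_C hi (set_nth_default c) ?size_C // nth_traject. Qed.

Lemma nth_WC i : i < k0 -> nth a W i = iter i.+1 g c.
Proof. by move=> hi; rewrite nth_W ?nth_S //; last exact: leq_trans hi k0_le. Qed.

Definition pJ x := if x \in W then nth a W (index x W).-1 else g x.
Definition r1 := nth a W 0.
Definition r3 := nth a W (size W).-1.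

Lemma W_gt0 : 0 < size W.
Proof. exact: leq_trans k0_gt0 k0_le. Qed.

Lemma pJ_nth i : i < size W -> pJ (nth a W i) = nth a W i.-1.
Proof. by move=> hi; rewrite /pJ mem_nth // index_uniq // W_uniq. Qed.

Lemma pJ_out x : x \notin W -> pJ x = g x.
Proof. by rewrite /pJ => /negbTE ->. Qed.

Lemma pJ_r1 : pJ r1 = r1.
Proof. by rewrite /r1 pJ_nth // W_gt0. Qed.

Lemma pJ_iterW i j : i < size W -> iter j pJ (nth a W i) = nth a W (i - j).
Proof. apply: spine_iter; exact: pJ_nth. Qed.

Lemma pJ_reach x : exists k, iter k pJ x = r1.
Proof.
suff [i hi] : exists i, iter i pJ x \in W.
  exists (index (iter i pJ x) W + i).
  by rewrite iterD -{2}(nth_index a hi) pJ_iterW ?index_mem // subnn.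
suff H : forall j, (exists i, iter i pJ x \in W) \/ iter j pJ x = iter j g x.
  case: (H n) => // e; exists n; rewrite e mem_W; exact: per_n.
elim=> [|j [IH|IH]]; [by right| by left |].
case: (boolP (iter j pJ x \in W)) => h; first by left; exists j.
by right; rewrite !iterS IH pJ_out // -IH.
Qed.

Lemma anc_r3 y : (exists k, iter k pJ r3 = y) <-> y \in W.
Proof.
have hl : (size W).-1 < size W by rewrite prednK // W_gt0.
split.
  by move=> [k <-]; rewrite /r3 pJ_iterW // mem_nth //; exact: leq_ltn_trans (leq_subr _ _) hl.
move=> hy; exists ((size W).-1 - index y W).
rewrite /r3 pJ_iterW // subKn ?nth_index //.
by rewrite -ltnS prednK ?W_gt0 // index_mem.
Qed.

Lemma pJ_a i : i <= m0 -> iter i pJ a = iter i g a.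
Proof.
elim: i => // i IH hi; rewrite !iterS IH; last exact: ltnW.
rewrite pJ_out // mem_W; apply/negP => /m0_min; lia.
Qed.

Lemma c_nth : nth a W k0.-1 = c.
Proof.
have h := k0_gt0.
by rewrite nth_WC ?prednK ?k0_iter //; lia.
Qed.

Lemma pJ_c j : iter j pJ c = iter (k0.-1 - j).+1 g c.
Proof.
have h := k0_gt0; have h2 := k0_le.
rewrite -{1}c_nth pJ_iterW; last lia.
by rewrite nth_WC //; lia.
Qed.

Lemma anc_r2 y : (exists k, iter k pJ a = y) <-> (exists k, iter k g a = y).
Proof.
have hc : iter m0 pJ a = c by rewrite pJ_a.
split; move=> [k <-].
  case: (leqP k m0) => h; first by exists k; rewrite pJ_a.
  rewrite -(subnK (ltnW h)) iterD hc pJ_c.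
  by exists ((k0.-1 - (k - m0)).+1 + m0); rewrite iterD.
case: (leqP k m0) => h; first by exists k; rewrite pJ_a.
rewrite -(subnK (ltnW h)) iterD -/c iter_mod.
set t := (k - m0) %% k0.
have ht : t < k0 by rewrite ltn_mod k0_gt0.
case: (posnP t) => [->|t0]; first by exists m0.
exists ((k0 - t) + m0); rewrite iterD hc pJ_c.
by congr (iter _ g c); lia.
Qed.

End Joyal.

End J.
Import J.

Module D.

Set Implicit Arguments.
Unset Strict Implicit.
Unset Printing Implicit Defensive.

Section Decode.
Variables (n : nat) (p : 'I_n -> 'I_n) (r1 a r3 : 'I_n).
Definition trD := traject p r3 n.+1.
Definition WD := rev (take (index r1 trD).+1 trD).
Definition traD := traject p a n.+1.
Definition cD := nth a traD (find [pred x | x \in WD] traD).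
Definition kD := (index cD WD).+1.
Definition SD := rotr 1 (take kD WD) ++ enum [set x in drop kD WD].
Definition gD x := if x \in WD then nth a WD (index x SD) else p x.
End Decode.

Lemma size_uniq_n n (s : seq 'I_n) : uniq s -> size s <= n.
Proof. by move/card_uniqP <-; have := max_card (mem s); rewrite card_ord. Qed.

Section RT1.
Variables (n : nat) (g : 'I_n -> 'I_n) (a : 'I_n).
Local Notation W := (W g a).
Local Notation pJ := (pJ g a).

Lemma WD_W : WD pJ (r1 g a) (r3 g a) = W.
Proof.
set L := (size W).-1.
have hW := W_gt0 g a; have hn := size_uniq_n (W_uniq g a).
have hL : L < size W by rewrite /L; lia.
have tr i : i < n.+1 -> nth a (trD pJ (r3 g a)) i = nth a W (L - i).
  move=> hi; rewrite /trD (set_nth_default (r3 g a)) ?size_traject // nth_traject //.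
  by rewrite /r3 pJ_iterW.
have ix : index (r1 g a) (trD pJ (r3 g a)) = L.
  apply: (@index_eq _ a); first by rewrite size_traject; lia.
    by rewrite tr ?subnn //; lia.
  move=> j hj; rewrite tr; last lia.
  rewrite /r1 nth_uniq ?W_uniq //; [by rewrite subn_eq0 -ltnNge|exact: leq_ltn_trans (leq_subr _ _) hL].
rewrite /WD ix; apply: (eq_from_nth (x0 := a)).
  by rewrite size_rev size_takel ?size_traject; lia.
move=> i; rewrite size_rev size_takel ?size_traject; last lia.
move=> hi; rewrite nth_rev ?size_takel ?size_traject; try lia.
by rewrite nth_take; last lia; rewrite tr; [congr nth|]; lia.
Qed.

Lemma cD_c : cD pJ (r1 g a) a (r3 g a) = c g a.
Proof.
rewrite /cD WD_W.
have hm := m0_le_n g a.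
have tra i : i < n.+1 -> nth a (traD pJ a) i = iter i pJ a.
  by move=> hi; rewrite /traD nth_traject.
have -> : find [pred x | x \in W] (traD pJ a) = m0 g a.
  apply: (@find_eq _ a); first by rewrite size_traject.
    by rewrite /= tra // pJ_a // mem_W per_c.
  move=> j hj; rewrite /= tra; last lia.
  rewrite pJ_a ?mem_W; last exact: ltnW.
  by apply/negP => /m0_min; lia.
by rewrite tra // pJ_a.
Qed.

Lemma kD_k0 : kD pJ (r1 g a) a (r3 g a) = k0 g a.
Proof.
rewrite /kD cD_c WD_W -c_nth index_uniq ?W_uniq ?prednK //; first [exact: k0_gt0 | by have := k0_le g a].

Qed.

Lemma takeW : rotr 1 (take (k0 g a) W) = C g a.
Proof.
rewrite /W -map_take take_size_cat ?size_C // map_traject /C.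
have h := k0_gt0 g a; case E : (k0 g a) h => [//|k] _.
have ck : iter k.+1 g (c g a) = c g a by rewrite -E k0_iter.
by rewrite trajectSr -iterSr ck rotr1_rcons trajectS.
Qed.

Lemma dropW : [set x in drop (k0 g a) W] = Q g a.
Proof.
apply/setP => x; rewrite !inE mem_drop_uniq ?W_uniq // mem_W.
by rewrite -(mem_rotr 1) takeW.
Qed.

Lemma SD_S : SD pJ (r1 g a) a (r3 g a) = S g a.
Proof. by rewrite /SD kD_k0 WD_W takeW dropW. Qed.

Lemma gD_g : gD pJ (r1 g a) a (r3 g a) =1 g.
Proof.
move=> x; rewrite /gD SD_S WD_W.
case: (boolP (x \in W)) => h; last by rewrite pJ_out.
have hS : x \in S g a by rewrite mem_S -(mem_W g a).
by rewrite nth_W ?nth_index // -size_S index_mem.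
Qed.
End RT1.

Section RT2.
Variables (n : nat) (p : 'I_n -> 'I_n) (r1 a r3 : 'I_n).
Hypothesis pr : p r1 = r1.
Hypothesis reach : forall x, exists k, iter k p x = r1.
Local Notation W' := (WD p r1 r3).
Local Notation S' := (SD p r1 a r3).
Local Notation g' := (gD p r1 a r3).
Local Notation c' := (cD p r1 a r3).
Local Notation K := (kD p r1 a r3).
Local Notation d := (dep reach r3).

Lemma ixD : index r1 (trD p r3) = d.
Proof.
have hd := dep_lt_n pr reach r3.
apply: (@index_eq _ r3); first by rewrite size_traject; lia.
  by rewrite nth_traject ?(dep_iter reach) //; lia.
move=> j hj; rewrite nth_traject; last lia.
by apply/eqP => /(dep_min reach); lia.
Qed.

Lemma size_WD : size W' = d.+1.
Proof.
have hd := dep_lt_n pr reach r3.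
by rewrite /WD size_rev ixD size_takel ?size_traject //; lia.
Qed.

Lemma nth_WD i : i <= d -> nth a W' i = iter (d - i) p r3.
Proof.
have hd := dep_lt_n pr reach r3.
move=> hi; rewrite /WD nth_rev ixD size_takel ?size_traject //; try lia.
rewrite nth_take; last lia.
by rewrite (set_nth_default r3) ?size_traject ?nth_traject; try lia; congr (iter _ p r3); lia.
Qed.

Lemma WD_uniq : uniq W'.
Proof.
apply/(uniqP a) => i j; rewrite !inE size_WD => hi hj.
rewrite !nth_WD; try lia.
move/(iter_inj pr (leq_subr _ _) (leq_subr _ _)); lia.
Qed.

Lemma WD_spine i : i < size W' -> p (nth a W' i) = nth a W' i.-1.
Proof.
rewrite size_WD => hi; rewrite !nth_WD; try lia.
case: i hi => [|i] hi /=; first by rewrite subn0 (dep_iter reach) pr.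
by rewrite -iterS; congr (iter _ p r3); lia.
Qed.

Lemma WD0 : nth a W' 0 = r1.
Proof. by rewrite nth_WD // subn0 (dep_iter reach). Qed.

Lemma WDd : nth a W' d = r3.
Proof. by rewrite nth_WD // subnn. Qed.

Lemma r1_WD : r1 \in W'.
Proof. by rewrite -{1}WD0 mem_nth // size_WD. Qed.

Definition mD := find [pred x | x \in W'] (traD p a).

Lemma mD_lt : mD < n.+1.
Proof.
have hd := dep_lt_n pr reach a.
rewrite /mD -(size_traject p a n.+1) -has_find; apply/hasP.
exists (iter (dep reach a) p a); last by rewrite /= dep_iter r1_WD.
by apply/trajectP; exists (dep reach a) => //; lia.
Qed.

Lemma cD_eq : c' = iter mD p a.
Proof. by rewrite /cD -/mD nth_traject // mD_lt. Qed.

Lemma cD_in : c' \in W'.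
Proof.
have h : has [pred x | x \in W'] (traD p a) by rewrite has_find size_traject mD_lt.
by have := nth_find a h.
Qed.

Lemma before_mD j : j < mD -> iter j p a \notin W'.
Proof.
move=> hj; have := before_find a hj.
by rewrite /= nth_traject ?(ltn_trans hj mD_lt) // => ->.
Qed.

Lemma K_gt0 : 0 < K. Proof. by []. Qed.

Lemma K_le : K <= size W'.
Proof. by rewrite /kD index_mem cD_in. Qed.

Lemma nth_K : nth a W' K.-1 = c'.
Proof. by rewrite /kD /= nth_index // cD_in. Qed.

Lemma perm_SD : perm_eq S' W'.
Proof.
rewrite /SD -{3}(cat_take_drop K W'); apply: perm_cat; first by rewrite perm_rotr.
apply: uniq_perm; first exact: enum_uniq.
  by move: WD_uniq; rewrite -{1}(cat_take_drop K W') cat_uniq => /and3P [_ _ ->].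
by move=> x; rewrite mem_enum inE.
Qed.

Lemma SD_uniq : uniq S'.
Proof. by rewrite (perm_uniq perm_SD) WD_uniq. Qed.

Lemma size_SD : size S' = size W'.
Proof. exact: perm_size perm_SD. Qed.

Lemma mem_SD x : (x \in S') = (x \in W').
Proof. exact: (perm_mem perm_SD). Qed.

Lemma SD_head : rotr 1 (take K W') = c' :: take K.-1 W'.
Proof.
have h := K_le.
by rewrite -{1}(prednK K_gt0) (take_nth a) ?prednK // nth_K rotr1_rcons.
Qed.

Lemma nth_SD i : i < K -> nth a S' i = if i is i'.+1 then nth a W' i' else c'.
Proof.
move=> hi; have h := K_le.
have sz : size (c' :: take K.-1 W') = K.
  by rewrite [size _]/= size_takel ?prednK //; apply: leq_trans h; exact: leq_pred.
rewrite /SD nth_cat SD_head sz hi.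
case: i hi => // i hi; rewrite [nth _ (_ :: _) _]/= nth_take //.
Qed.

Lemma WD_gt0 : 0 < size W'.
Proof. by rewrite size_WD. Qed.

Lemma gD_nth i : i < size W' -> g' (nth a S' i) = nth a W' i.
Proof.
move=> hi; have hS : nth a S' i \in W' by rewrite -mem_SD mem_nth // size_SD.
by rewrite /gD hS index_uniq ?SD_uniq ?size_SD.
Qed.

Lemma gD_in x : x \in W' -> g' x \in W'.
Proof. by move=> h; rewrite /gD h mem_nth // -size_SD index_mem mem_SD. Qed.

Lemma gD_out x : x \notin W' -> g' x = p x.
Proof. by rewrite /gD => /negbTE ->. Qed.

Lemma gD_inj x y : x \in W' -> y \in W' -> g' x = g' y -> x = y.
Proof.
move=> hx hy; rewrite /gD hx hy => /eqP.
rewrite nth_uniq ?WD_uniq -?size_SD ?index_mem ?mem_SD // => /eqP e.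
by rewrite -(nth_index a (x := x) (s := S')) ?mem_SD // e nth_index ?mem_SD.
Qed.

Lemma iter_gD_W i x : x \in W' -> iter i g' x \in W'.
Proof. by move=> h; apply: iter_in => // y; exact: gD_in. Qed.

Lemma per_gD x : per g' x = (x \in W').
Proof.
apply/idP/idP => [|h].
  move=> hp; apply: contraT => h; case/perP: hp => j j0 hj.
  have H : forall i, (iter i g' x \in W') \/ (iter i g' x = iter i p x).
    elim=> [|i [IH|IH]]; [by right|by left; rewrite iterS gD_in|].
    case: (boolP (iter i g' x \in W')) => h'; first by left; rewrite iterS gD_in.
    by right; rewrite !iterS IH gD_out // -IH.
  case: (H j) => [|e]; first by rewrite hj (negbTE h).
  have ex : x = r1 by apply: (no_cycle pr reach j0); rewrite -e.
  by move: h; rewrite ex r1_WD.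
have [i [j [ij jn e]]] := pigeon g' x.
apply/perP; exists (j - i); first lia.
have e' : iter i g' x = iter (i + (j - i)) g' x by rewrite subnKC // ltnW.
move: e'; clear e; move: (j - i) => t.
elim: i {ij jn} => [|i IH]; first by move=> /=; rewrite add0n => e; rewrite -e.
rewrite addSn !iterS => /gD_inj H; apply: IH; apply: H; exact: iter_gD_W.
Qed.

Lemma iter_gD_a i : i <= mD -> iter i g' a = iter i p a.
Proof.
elim: i => // i IH hi; rewrite !iterS IH ?gD_out //; last exact: ltnW.
exact: before_mD.
Qed.

Lemma m0_gD : m0 g' a = mD.
Proof.
apply/eqP; rewrite eqn_leq; apply/andP; split.
  apply: m0_min; rewrite per_gD iter_gD_a // -cD_eq; exact: cD_in.
rewrite leqNgt; apply/negP => h.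
have := per_c g' a; rewrite /c per_gD iter_gD_a; last exact: ltnW.
by rewrite (negbTE (before_mD h)).
Qed.

Lemma c_gD : c g' a = c'.
Proof. by rewrite /c m0_gD iter_gD_a // cD_eq. Qed.

Lemma iter_cD j : j < K -> iter j.+1 g' c' = nth a W' j.
Proof.
have hK := K_le.
elim: j => [|j IH] hj.
  by rewrite /= -(nth_SD (i := 0)) // gD_nth // WD_gt0.
rewrite iterS IH; last exact: ltnW.
by rewrite -(nth_SD (i := j.+1)) // gD_nth //; lia.
Qed.

Lemma k0_gD : k0 g' a = K.
Proof.
have hK := K_le.
have hK1 : iter K g' c' = c' by rewrite -{1}(prednK K_gt0) iter_cD ?nth_K // prednK.
apply/eqP; rewrite eqn_leq; apply/andP; split.
  by apply: k0_min => //; rewrite c_gD.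
rewrite leqNgt; apply/negP => h.
have h0 := k0_gt0 g' a.
have hk : (k0 g' a).-1 < K by lia.
have := k0_iter g' a; rewrite c_gD -(prednK h0) (iter_cD hk) -nth_K.
have s1 : (k0 g' a).-1 < size W' := leq_trans hk hK.
have s2 : K.-1 < size W' by rewrite prednK.
move/eqP; rewrite (nth_uniq a s1 s2 WD_uniq).
by move/eqP; lia.
Qed.

Lemma C_gD : C g' a = rotr 1 (take K W').
Proof.
have hK := K_le.
rewrite /C c_gD k0_gD SD_head; apply: (eq_from_nth (x0 := a)).
  by rewrite size_traject /= size_takel ?prednK //; exact: leq_trans (leq_pred _) hK.
move=> i; rewrite size_traject => hi.
rewrite (set_nth_default c') ?size_traject // nth_traject //.
case: i hi => [//|i] hi.
have hi' : i < K.-1 by lia.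
rewrite iter_cD; last lia.
change (nth a (c' :: take K.-1 W') i.+1) with (nth a (take K.-1 W') i).
by rewrite nth_take.
Qed.

Lemma Q_gD : Q g' a = [set x in drop K W'].
Proof.
apply/setP => x; rewrite !inE per_gD C_gD mem_rotr mem_drop_uniq //; exact: WD_uniq.
Qed.

Lemma S_gD : S g' a = S'.
Proof. by rewrite /S Q_gD C_gD. Qed.

Lemma W_gD : W g' a = W'.
Proof.
rewrite /W S_gD; apply: (eq_from_nth (x0 := a)); first by rewrite size_map size_SD.
move=> i; rewrite size_map size_SD => hi.
by rewrite (nth_map a) ?size_SD // gD_nth.
Qed.

Lemma pJ_gD : pJ g' a =1 p.
Proof.
move=> x; rewrite /pJ W_gD; case: (boolP (x \in W')) => h; last by rewrite gD_out.
by rewrite -{2}(nth_index a h) WD_spine // index_mem.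
Qed.

Lemma r1_gD : J.r1 g' a = r1.
Proof. by rewrite /J.r1 W_gD WD0. Qed.

Lemma r3_gD : J.r3 g' a = r3.
Proof. by rewrite /J.r3 W_gD size_WD WDd. Qed.
End RT2.

End D.
Import D.


Set Implicit Arguments.
Unset Strict Implicit.
Unset Printing Implicit Defensive.

Section Main.
Variable n : nat.

Definition gf (f : {ffun 'I_n.+1 -> 'I_n}) : 'I_n -> 'I_n := fun y => f (incl y).
Definition af (f : {ffun 'I_n.+1 -> 'I_n}) : 'I_n := f ord_max.

Definition phi (f : {ffun 'I_n.+1 -> 'I_n}) : trt n :=
  (Ep (pJ (gf f) (af f)) (J.r1 (gf f) (af f)), J.r1 (gf f) (af f), af f, J.r3 (gf f) (af f)).

Definition fD (p : 'I_n -> 'I_n) (r1 a r3 : 'I_n) : {ffun 'I_n.+1 -> 'I_n} :=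
  [ffun x : 'I_n.+1 => if x == ord_max then a else gD p r1 a r3 (insubd a (val x))].

Lemma incl_neq (y : 'I_n) : incl y != ord_max.
Proof. by rewrite -val_eqE /= neq_ltn ltn_ord. Qed.

Lemma incl_inj : injective (@incl n).
Proof. by move=> x y /(congr1 val) /= /val_inj. Qed.

Lemma incl_insubd (a : 'I_n) (x : 'I_n.+1) : x != ord_max -> incl (insubd a (val x)) = x.
Proof.
move=> h; apply: val_inj; rewrite /= val_insubd.
have hx := ltn_ord x.
have h' : val x != n by move: h; rewrite -val_eqE.
have hxn : val x < n by rewrite ltn_neqAle h' -ltnS hx.
by rewrite hxn.
Qed.

Lemma insubd_incl (a y : 'I_n) : insubd a (val (incl y)) = y.
Proof. by apply: val_inj; rewrite val_insubd /= ltn_ord. Qed.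

Lemma gf_fD p r1 a r3 : gf (fD p r1 a r3) = gD p r1 a r3.
Proof.
apply: functional_extensionality => y.
by rewrite /gf /fD ffunE (negbTE (incl_neq y)) insubd_incl.
Qed.

Lemma af_fD p r1 a r3 : af (fD p r1 a r3) = a.
Proof. by rewrite /af /fD ffunE eqxx. Qed.

Lemma iter_fself f k y : iter k (fself f) (incl y) = incl (iter k (gf f) y).
Proof. by elim: k => //= k ->. Qed.

Lemma iter_fself_max f k : iter k.+1 (fself f) ord_max = incl (iter k (gf f) (af f)).
Proof. by rewrite iterSr iter_fself. Qed.

Lemma split_x (a : 'I_n) (x : 'I_n.+1) : x = ord_max \/ x = incl (insubd a (val x)).
Proof.
case: (eqVneq x ord_max) => h; [by left|right].
by rewrite incl_insubd.
Qed.

Lemma periodicE f x : periodic f x <-> exists2 y, x = incl y & per (gf f) y.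
Proof.
split.
  move=> [j [j0 hj]].
  case: (split_x (af f) x) => ex.
    move: hj; rewrite ex; case: j j0 => // j _.
    by rewrite iter_fself_max => /eqP; rewrite (negbTE (incl_neq _)).
  exists (insubd (af f) (val x)) => //; apply/perP; exists j => //.
  by apply: incl_inj; rewrite -iter_fself -ex.
move=> [y -> /perP [j j0 hj]]; exists j; split => //.
by rewrite iter_fself hj.
Qed.

Lemma orbitE f x : in_orbit_top f x <-> exists2 y, x = incl y & exists k, iter k (gf f) (af f) = y.
Proof.
split.
  move=> [k [k1 <-]]; case: k k1 => // k _; rewrite iter_fself_max.
  by exists (iter k (gf f) (af f)) => //; exists k.
by move=> [y -> [k <-]]; exists k.+1; split => //; rewrite iter_fself_max.
Qed.

Lemma ancE f y v : ancestor (phi f) y v <-> exists k, iter k (pJ (gf f) (af f)) v = y.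
Proof.
rewrite /ancestor /=; exact: (anc_Ep (pJ_r1 _ _) (pJ_reach _ _)).
Qed.

End Main.

Theorem theorem2 (n : nat) (hn : 1 <= n) :
  exists phi : {ffun 'I_n.+1 -> 'I_n} -> trt n,
    [/\ (forall f, is_trt (phi f)),
        injective phi,
        (forall t : trt n, is_trt t -> exists f, phi f = t)
      & forall f : {ffun 'I_n.+1 -> 'I_n},
          (forall x : 'I_n.+1,
             in_orbit_top f x <-> exists2 y : 'I_n, x = incl y & ancestor (phi f) y (root2 (phi f))) /\
          (forall x : 'I_n.+1,
             periodic f x <-> exists2 y : 'I_n, x = incl y & ancestor (phi f) y (root3 (phi f)))].
Proof.
exists (@phi n); split.
- move=> f; exact: (Ep_tree (pJ_r1 _ _) (pJ_reach _ _)).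
- move=> f1 f2 e.
  have e1 : J.r1 (gf f1) (af f1) = J.r1 (gf f2) (af f2) by move: e; rewrite /phi => [[]].
  have ea : af f1 = af f2 by move: e; rewrite /phi => [[]].
  have e3 : J.r3 (gf f1) (af f1) = J.r3 (gf f2) (af f2) by move: e; rewrite /phi => [[]].
  have eE : Ep (pJ (gf f1) (af f1)) (J.r1 (gf f1) (af f1)) = Ep (pJ (gf f2) (af f2)) (J.r1 (gf f2) (af f2)).
    by move: e; rewrite /phi => [[]].
  rewrite -e1 in eE.
  have hp2 := pJ_r1 (gf f2) (af f2); rewrite -e1 in hp2.
  have hr2 := pJ_reach (gf f2) (af f2); rewrite -e1 in hr2.
  have ep := Ep_uniq (pJ_r1 _ _) (pJ_reach _ _) hp2 hr2 eE.
  have ep' := functional_extensionality _ _ ep.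
  have eg : gf f1 =1 gf f2.
    move=> y; rewrite -(gD_g (gf f1) (af f1)) -(gD_g (gf f2) (af f2)).
    by rewrite ep' e1 e3 ea.
  apply/ffunP => x; case: (split_x (af f1) x) => ->; first exact: ea.
  exact: eg.
- move=> [[[E r1] r2] r3] tE.
  rewrite /is_trt /tedges /= in tE.
  set p := par r1 tE.
  have pr : p r1 = r1 by exact: par_r.
  have reach := par_reach r1 tE.
  exists (fD p r1 r2 r3).
  rewrite /phi gf_fD af_fD.
  rewrite (functional_extensionality _ _ (pJ_gD r2 r3 pr reach)).
  by rewrite r1_gD // r3_gD // par_Ep.
- move=> f; split => x.
    rewrite orbitE; split => [[y -> h]|[y -> h]]; exists y => //.
      by apply/ancE; rewrite /root2 /=; apply/anc_r2.
    by apply/anc_r2; move/ancE: h.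
  rewrite periodicE; split => [[y -> h]|[y -> h]]; exists y => //.
    by apply/ancE; rewrite /root3 /=; apply/anc_r3; rewrite mem_W.
  by rewrite -(mem_W (gf f) (af f)); apply/anc_r3; move/ancE: h.
Qed.
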